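(* Let $\sigma>0$, $\mu_0\in\mathbb{R}^P$, $Y=\mu_0+W$ with $W\sim\mathcal N(0,\sigma^2\mathrm{Id}_P)$, $\lambda>0$ and $0<\epsilon<2\lambda$. Let $\mathrm{ST}$ be the soft-thresholding, $\mathrm{ST}(y,\lambda)_i=y_i+\lambda$ if $y_i\le-\lambda$, $0$ if $-\lambda<y_i<\lambda$, $y_i-\lambda$ otherwise, and let $$\widehat{\mathrm{df}}^{\mathrm{FD}}(y,\lambda,\epsilon)=\frac1\epsilon\sum_{i=1}^P\big(\mathrm{ST}(y+\epsilon e_i,\lambda)-\mathrm{ST}(y,\lambda)\big)_i.$$ Then the weak gradient $\nabla_2\widehat{\mathrm{df}}^{\mathrm{FD}}(y,\lambda,\epsilon)$ of $\lambda\mapsto\widehat{\mathrm{df}}^{\mathrm{FD}}(y,\lambda,\epsilon)$ satisfies $$\mathbb{E}_W\big[\nabla_2\widehat{\mathrm{df}}^{\mathrm{FD}}(Y,\lambda,\epsilon)\big]=-\frac12\sum_{i=1}^P\frac{\varphi[(\mu_0)_i,\lambda,\epsilon]}{\epsilon},$$ $$\mathbb{V}_W\big[\nabla_2\widehat{\mathrm{df}}^{\mathrm{FD}}(Y,\lambda,\epsilon)\big]=\frac1{2\epsilon}\sum_{i=1}^P\frac{\varphi[(\mu_0)_i,\lambda,\epsilon]}{\epsilon}-\frac14\sum_{i=1}^P\Big[\frac{\varphi[(\mu_0)_i,\lambda,\epsilon]}{\epsilon}\Big]^2,$$ where for $a\in\mathbb{R}$, $$\varphi[a,\lambda,\ep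silon]=\operatorname{erf}\!\Big(\tfrac{a+\lambda+\epsilon}{\sqrt2\sigma}\Big)-\operatorname{erf}\!\Big(\tfrac{a+\lambda}{\sqrt2\sigma}\Big)+\operatorname{erf}\!\Big(\tfrac{a-\lambda+\epsilon}{\sqrt2\sigma}\Big)-\operatorname{erf}\!\Big(\tfrac{a-\lambda}{\sqrt2\sigma}\Big).$$
   Context: $(e_i)$ is the canonical basis of $\mathbb{R}^P$; $\mathbb{E}_W$ and $\mathbb{V}_W$ denote expectation and variance with respect to $W$. The weak derivative of $\mathrm{ST}$ with respect to $\lambda$ is $\partial_\lambda\mathrm{ST}(y,\lambda)_i=0$ if $|y_i|\le\lambda$ and $-\operatorname{sign}(y_i)$ otherwise, so that $\nabla_2\widehat{\mathrm{df}}^{\mathrm{FD}}(y,\lambda,\epsilon)=\frac1\epsilon\sum_i\big(\partial_\lambda\mathrm{ST}(y+\epsilon e_i,\lambda)_i-\partial_\lambda\mathrm{ST}(y,\lambda)_i\big)$. *)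

(* Defs.v *)
From HB Require Import structures.
From mathcomp Require Import all_boot all_order all_algebra.
From mathcomp Require Import all_classical all_reals all_analysis.
Set Implicit Arguments. Unset Strict Implicit. Unset Printing Implicit Defensive.
Import Order.TTheory GRing.Theory Num.Theory.
Import numFieldNormedType.Exports.
Local Open Scope classical_set_scope.
Local Open Scope ring_scope.

Section defs.
Context {R : realType}.

Definition erf (x : R) : R :=
  2 / Num.sqrt pi *
  (if 0 <= x then Rintegral lebesgue_measure `[0, x] (fun t => expR (- t ^+ 2))
   else - Rintegral lebesgue_measure `[x, 0] (fun t => expR (- t ^+ 2))).

Definition st (lam t : R) : R :=
  if t <= - lam then t + lam else if t < lam then 0 else t - lam.

Definition ST (n : nat) (y : 'I_n -> R) (lam : R) : 'I_n -> R :=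
  fun i => st lam (y i).

Definition basis_vec (n : nat) (i : 'I_n) : 'I_n -> R :=
  fun j => (j == i)%:R.

Definition dfFD (n : nat) (y : 'I_n -> R) (lam eps : R) : R :=
  eps^-1 * \sum_(i < n)
     (ST (fun j => y j + eps * basis_vec i j) lam i - ST y lam i).

(* weak derivative of ST w.r.t. lambda (as given in the paper) *)
Definition dST (n : nat) (y : 'I_n -> R) (lam : R) : 'I_n -> R :=
  fun i => if `|y i| <= lam then 0 else - Num.sg (y i).

(* weak gradient nabla_2 dfFD (as given in the paper) *)
Definition grad2_dfFD (n : nat) (y : 'I_n -> R) (lam eps : R) : R :=
  eps^-1 * \sum_(i < n)
     (dST (fun j => y j + eps * basis_vec i j) lam i - dST y lam i).

Definition varphi (sigma a lam eps : R) : R :=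
  let c := Num.sqrt 2 * sigma in
  erf ((a + lam + eps) / c) - erf ((a + lam) / c)
  + erf ((a - lam + eps) / c) - erf ((a - lam) / c).

End defs.

(* Mutual independence of a finite family of real random variables:
   product rule for all families of Borel sets (taking B i = setT gives
   every subfamily). *)
Definition mutually_independent {d} {T : measurableType d} {R : realType}
  (P : probability T R) (n : nat) (X : 'I_n -> {RV P >-> R}) : Prop :=
  forall B : 'I_n -> set R, (forall i, measurable (B i)) ->
    P (\bigcap_(i in [set: 'I_n]) (X i @^-1` B i)) =
    (\prod_(i < n) P (X i @^-1` B i))%E.

(* Main.v *)
Require Import Defs.
From HB Require Import structures.
From mathcomp Require Import all_boot all_order all_algebra.
From mathcomp Require Import all_classical all_reals all_analysis.
From mathcomp Require Import ring lra measurable_realfun.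
Import Order.TTheory GRing.Theory Num.Theory.
Import numFieldNormedType.Exports.
Local Open Scope classical_set_scope.
Local Open Scope ring_scope.
Section A.
Context {R : realType}.
Notation mu := (@lebesgue_measure R).
Definition gf (t : R) : R := expR (- t ^+ 2).

Lemma gf_cont : continuous gf.
Proof. exact: continuous_gauss_fun. Qed.

Lemma gf_int (a b : R) : mu.-integrable `[a, b] (EFin \o gf).
Proof.
apply: continuous_compact_integrable; first exact: segment_compact.
apply: continuous_subspaceT => x; exact: gf_cont.
Qed.

Definition Sg (x : R) : R :=
  if 0 <= x then \int[mu]_(t in `[0, x]) gf t
  else - \int[mu]_(t in `[x, 0]) gf t.

Lemma erfE x : erf x = 2 / Num.sqrt pi * Sg x.
Proof. by []. Qed.

Lemma Sg_itv a b : a <= b -> \int[mu]_(t in `[a, b]) gf t = Sg b - Sg a.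
Proof.
move=> ab; rewrite /Sg.
have [a0|a0] := leP 0 a.
  rewrite (le_trans a0 ab).
  rewrite (Rintegral_itvB (gf_int 0 b)) ?bnd_simp//.
  by rewrite Rintegral_itv_obnd_cbnd //; apply: integrableS (gf_int 0 b) => //;
    apply: subset_itvr; rewrite bnd_simp.
have [b0|b0] := leP 0 b.
  rewrite opprK.
  have := Rintegral_itvB (x:=0) (gf_int a b).
  rewrite Rintegral_itv_obnd_cbnd; last by
   apply: integrableS (gf_int a b) => //; apply: subset_itvr; rewrite bnd_simp ltW.
  move=> <-; rewrite ?bnd_simp ?(ltW a0)//.
  by rewrite subrK.
rewrite opprK.
have := Rintegral_itvB (x:=b) (gf_int a 0).
rewrite Rintegral_itv_obnd_cbnd; last by
   apply: integrableS (gf_int a 0) => //; apply: subset_itvr; rewrite bnd_simp.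
move=> <-; rewrite ?bnd_simp ?(ltW b0)//.
by rewrite opprB subrK.
Qed.

Lemma Sg_oddp x : 0 < x -> Sg (- x) = - Sg x.
Proof.
move=> x0; rewrite /Sg oppr_ge0 (ltW x0) leNgt x0 /=; congr (- _).
rewrite /Rintegral; congr fine.
have := @integration_by_substitution_oppr R gf 0 x (ltW x0).
rewrite oppr0 => ->; last by apply: continuous_subspaceT => y; exact: gf_cont.
by apply: eq_integral => y _ /=; rewrite /gf sqrrN.
Qed.

Lemma Sg0 : Sg 0 = 0.
Proof. by rewrite /Sg lexx set_itv1 Rintegral_set1. Qed.

Lemma Sg_odd x : Sg (- x) = - Sg x.
Proof.
have [x0|x0|->] := ltgtP x 0; last by rewrite oppr0 Sg0 oppr0.
  by have := @Sg_oddp (- x); rewrite opprK oppr_gt0 => ->; rewrite ?opprK.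
exact: Sg_oddp.
Qed.

Lemma erf_odd (x : R) : erf (- x) = - erf x.
Proof. by rewrite !erfE Sg_odd mulrN. Qed.
End A.
Section B.
Context {R : realType}.
Notation mu := (@lebesgue_measure R).

Lemma scale_derive (k : R) : ( *%R k)^`()%classic = cst k.
Proof.
apply/funext => x; rewrite derive1E.
have -> : ( *%R k) = (fun z => k * z) by [].
rewrite deriveM//=. 
Abort.

Lemma subst_scale (k a b : R) (h : R -> R) : 0 < k -> a <= b ->
  continuous h ->
  (\int[mu]_(x in `[(k * a)%R, (k * b)%R]) (h x)%:E =
   \int[mu]_(x in `[a, b]) (h (k * x)%R * k)%:E)%E.
Proof.
move=> k0 ab ch.
have D : (( *%R k)^`())%classic = cst k.
  apply/funext => x; rewrite derive1E.
  have -> : ( *%R k) = (fun z => k * z) by [].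
  by rewrite deriveZ//= derive_id; rewrite /GRing.scale/= mulr1.
rewrite (@integration_by_substitution_increasing _ ( *%R k) h a b ab).
- by apply: eq_integral => x _; rewrite /= D.
- by move=> x y _ _ xy; rewrite ltr_pM2l.
- by rewrite D => ? _; exact: cvg_cst.
- by rewrite D; exact: is_cvg_cst.
- by rewrite D; exact: is_cvg_cst.
- split.
  + by move=> x _. 
  + by apply: cvg_at_right_filter; exact: mulrl_continuous.
  + by apply: cvg_at_left_filter; exact: mulrl_continuous.
- by apply: continuous_subspaceT.
Qed.

Lemma peakc (s : R) : 0 < s ->
  normal_peak s * (Num.sqrt 2 * s) = (Num.sqrt pi)^-1.
Proof.
move=> s0; rewrite /normal_peak -mulr_natr sqrtrM ?mulr_ge0 ?sqr_ge0 ?pi_ge0//.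
rewrite sqrtrM ?sqr_ge0// sqrtr_sqr gtr0_norm//.
have sp : 0 < Num.sqrt (pi : R) by rewrite sqrtr_gt0 pi_gt0.
have s2 : 0 < Num.sqrt 2 :> R by rewrite sqrtr_gt0.
rewrite !invfM; field.
all: try by rewrite !gt_eqF.
all: exact: ltW.
Qed.

Lemma normal_itv (s a b : R) : 0 < s -> a <= b ->
  normal_prob 0 s `]a, b] =
  ((erf (b / (Num.sqrt 2 * s)) - erf (a / (Num.sqrt 2 * s))) / 2)%:E.
Proof.
move=> s0 ab.
set c := Num.sqrt 2 * s.
have c0 : 0 < c by rewrite mulr_gt0// sqrtr_gt0.
set k := c^-1.
have k0 : 0 < k by rewrite invr_gt0.
rewrite /normal_prob integral_itv_obnd_cbnd; last first.
  apply/measurable_realfun.measurable_EFinP; apply: measurable_funTS; exact: measurable_normal_pdf.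
pose f := fun x => (gf (k * x)%R * k)%:E.
transitivity (\int[mu]_(x in `[a, b]) ((normal_peak s * c)%:E * f x))%E.
  apply: eq_integral => x _; rewrite /f -EFinM; congr EFin.
  rewrite normal_pdfE ?gt_eqF//= /normal_fun subr0 /gf /k.
  rewrite -mulrA; congr (_ * _); rewrite mulrCA divff ?gt_eqF// mulr1.
  congr expR; rewrite exprMn exprVn /c exprMn sqr_sqrtr//.
  by rewrite -mulr_natl mulNr mulrC.
rewrite ge0_integralZl//; last 3 first.
  - apply/measurable_realfun.measurable_EFinP; apply: measurable_funTS.
    apply: measurable_funM => //; apply: measurableT_comp => //; exact: measurable_gauss_fun.
  - by move=> x _; rewrite /f lee_fin; apply: mulr_ge0; [exact: expR_ge0|exact: ltW].
  - by rewrite lee_fin; apply: mulr_ge0; [exact: normal_peak_ge0|exact: ltW].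
rewrite /f -subst_scale//; last exact: gf_cont.
rewrite -(fineK (integrable_fin_num _ (gf_int _ _)))//.
rewrite -EFinM; congr EFin.
rewrite -/(Rintegral _ _ _) Sg_itv; last by rewrite ler_pM2l.
rewrite peakc// !erfE /k !(mulrC _ c^-1) -/c.
have sp : 0 < Num.sqrt (pi : R) by rewrite sqrtr_gt0 pi_gt0.
field; by rewrite gt_eqF.
Qed.

Lemma normal_itv2 (s a b : R) : 0 < s -> a <= b ->
  normal_prob 0 s `[a, b[ =
  ((erf (b / (Num.sqrt 2 * s)) - erf (a / (Num.sqrt 2 * s))) / 2)%:E.
Proof.
move=> s0 ab.
set c := Num.sqrt 2 * s.
have c0 : 0 < c by rewrite mulr_gt0// sqrtr_gt0.
set k := c^-1.
have k0 : 0 < k by rewrite invr_gt0.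
rewrite /normal_prob integral_itv_bndo_bndc; last first.
  apply/measurable_realfun.measurable_EFinP; apply: measurable_funTS; exact: measurable_normal_pdf.
pose f := fun x => (gf (k * x)%R * k)%:E.
transitivity (\int[mu]_(x in `[a, b]) ((normal_peak s * c)%:E * f x))%E.
  apply: eq_integral => x _; rewrite /f -EFinM; congr EFin.
  rewrite normal_pdfE ?gt_eqF//= /normal_fun subr0 /gf /k.
  rewrite -mulrA; congr (_ * _); rewrite mulrCA divff ?gt_eqF// mulr1.
  congr expR; rewrite exprMn exprVn /c exprMn sqr_sqrtr//.
  by rewrite -mulr_natl mulNr mulrC.
rewrite ge0_integralZl//; last 3 first.
  - apply/measurable_realfun.measurable_EFinP; apply: measurable_funTS.
    apply: measurable_funM => //; apply: measurableT_comp => //; exact: measurable_gauss_fun.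
  - by move=> x _; rewrite /f lee_fin; apply: mulr_ge0; [exact: expR_ge0|exact: ltW].
  - by rewrite lee_fin; apply: mulr_ge0; [exact: normal_peak_ge0|exact: ltW].
rewrite /f -subst_scale//; last exact: gf_cont.
rewrite -(fineK (integrable_fin_num _ (gf_int _ _)))//.
rewrite -EFinM; congr EFin.
rewrite -/(Rintegral _ _ _) Sg_itv; last by rewrite ler_pM2l.
rewrite peakc// !erfE /k !(mulrC _ c^-1) -/c.
have sp : 0 < Num.sqrt (pi : R) by rewrite sqrtr_gt0 pi_gt0.
field; by rewrite gt_eqF.
Qed.

Definition Aset (lam eps m : R) : set R :=
  `]lam - eps - m, lam - m] `|` `[- lam - eps - m, - lam - m[.

Lemma Aset_meas lam eps m : measurable (Aset lam eps m).
Proof. by apply: measurableU. Qed.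

Lemma normal_A (s lam eps m : R) : 0 < s -> 0 < lam -> 0 < eps -> eps < 2 * lam ->
  normal_prob 0 s (Aset lam eps m) = (varphi s m lam eps / 2)%:E.
Proof.
move=> s0 l0 e0 el.
rewrite /Aset measureU//; last first.
  rewrite -subset0 => x [] /=; rewrite !in_itv/= => /andP[h1 _] /andP[_ h2].
  lra.
rewrite /=.
have h1 : lam - eps - m <= lam - m by lra.
have h2 : - lam - eps - m <= - lam - m by lra.
rewrite normal_itv// normal_itv2//.
rewrite -EFinD; congr EFin.
rewrite /varphi.
set c := Num.sqrt 2 * s.
have E (z w : R) : z - w = - (w - z) by rewrite opprB.
rewrite (E lam m) (E (lam - eps) m) (E (- lam) m) (E (- lam - eps) m) !mulNr !erf_odd.
have -> : m - (lam - eps) = m - lam + eps by lra.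
have -> : m - (- lam - eps) = m + lam + eps by lra.
have -> : m - - lam = m + lam by lra.
lra.
Qed.
End B.
Section C.
Context {R : realType}.

Definition gd (lam t : R) : R := if `|t| <= lam then 0 else - Num.sg t.

Lemma gdE lam t : 0 < lam ->
  gd lam t = if lam < t then -1 else if t < - lam then 1 else 0.
Proof.
move=> l0; rewrite /gd ler_norml.
have [lt|lt] := ltP lam t.
  rewrite andbF gtr0_sg//; lra.
have [tl|tl] := ltP t (- lam).
  rewrite ltr0_sg ?opprK//; lra.
by [].
Qed.

Lemma gd_diff (lam eps t : R) : 0 < lam -> 0 < eps -> eps < 2 * lam ->
  gd lam (t + eps) - gd lam t =
  - (if (lam - eps < t <= lam) || (- lam - eps <= t < - lam) then 1 else 0).
Proof.
move=> l0 e0 el; rewrite !gdE//.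
have [h1|h1] := ltP lam (t + eps); have [h2|h2] := ltP lam t;
have [h3|h3] := ltP (t + eps) (- lam); have [h4|h4] := ltP t (- lam);
have [h5|h5] := ltP (lam - eps) t; have [h6|h6] := leP (- lam - eps) t;
have [h7|h7] := leP t (- lam); have [h8|h8] := leP t lam;
rewrite /=; lra.
Qed.

Definition cnd (lam eps t : R) : bool :=
  (lam - eps < t <= lam) || (- lam - eps <= t < - lam).

Lemma grad_pt n (y : 'I_n -> R) lam eps : 0 < lam -> 0 < eps -> eps < 2 * lam ->
  grad2_dfFD y lam eps = - eps^-1 * \sum_(i < n) (if cnd lam eps (y i) then 1 else 0).
Proof.
move=> l0 e0 el; rewrite /grad2_dfFD mulNr -mulrN -sumrN; congr (_ * _).
apply: eq_bigr => i _; rewrite /dST /basis_vec eqxx mulr1.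
exact: (@gd_diff lam eps (y i) l0 e0 el).
Qed.

Lemma indic_cnd (lam eps m u : R) :
  \1_(Aset lam eps m) u = if cnd lam eps (m + u) then 1 else 0 :> R.
Proof.
rewrite indicE /cnd /Aset.
case: ifPn => h.
  rewrite mem_set//; case/orP: h => /andP[h1 h2]; [left|right]; rewrite /= in_itv/=;
  apply/andP; split; lra.
rewrite memNset//; move=> [] /=; rewrite in_itv/= => /andP[h1 h2]; move: h;
  apply/negP/negPn/orP; [left|right]; apply/andP; split; lra.
Qed.
End C.
Section D.
Context {R : realType} (d : measure_display) (T : measurableType d) (P : probability T R).
Local Open Scope ereal_scope.

Lemma Lfun_indic (D : set T) : measurable D -> (\1_D : T -> R) \in Lfun P 1.
Proof. by move=> mD; apply/Lfun1_integrable; exact: integrable_indic. Qed.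

Lemma Lfun_sindic (a : R) (D : set T) : measurable D ->
  (fun w => a * \1_D w)%R \in Lfun P 1.
Proof.
move=> mD; have -> : (fun w => (a * \1_D w)%R) = (a \o* (\1_D : T -> R))%R.
  by apply/funext => w; rewrite /= mulrC.
apply: (@Lfun_scale _ _ _ P _ _ 1%R) => //; exact: Lfun_indic.
Qed.

Lemma E_sindic (a : R) (D : set T) : measurable D ->
  'E_P[fun w => (a * \1_D w)%R] = (a * fine (P D))%:E.
Proof.
move=> mD; have -> : (fun w => (a * \1_D w)%R) = (a \o* (\1_D : T -> R))%R by apply/funext => w; rewrite /= mulrC.
rewrite expectationZl; last exact: Lfun_indic.
rewrite expectation_indic// EFinM fineK//; exact: fin_num_measure.
Qed.

Lemma E_sum (I : Type) (s : seq I) (f : I -> T -> R) :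
  (forall i, f i \in Lfun P 1) ->
  (fun w => \sum_(i <- s) f i w)%R \in Lfun P 1 /\
  'E_P[fun w => (\sum_(i <- s) f i w)%R] = (\sum_(i <- s) 'E_P[f i])%E.
Proof.
move=> fL; elim: s => [|a s [IH1 IH2]].
  have -> : (fun w => \sum_(i <- [::]) f i w)%R = cst 0%R.
    by apply/funext => w; rewrite big_nil.
  rewrite big_nil expectation_cst; split => //; exact: Lfun_cst.
have -> : (fun w => \sum_(i <- a :: s) f i w)%R = (f a \+ fun w => \sum_(i <- s) f i w)%R.
  by apply/funext => w; rewrite big_cons.
split; first by rewrite rpredD.
by rewrite expectationD// IH2 big_cons.
Qed.

Lemma indep2 n (W : 'I_n -> {RV P >-> R}) (A : 'I_n -> set R) :
  mutually_independent W -> (forall i, measurable (A i)) -> forall i j, i != j ->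
  P (W i @^-1` A i `&` W j @^-1` A j) = (P (W i @^-1` A i) * P (W j @^-1` A j))%E.
Proof.
move=> ind mA i j ij.
have ji : j != i by rewrite eq_sym.
pose B k := if k == i then A i else if k == j then A j else setT.
have mB : forall k, measurable (B k).
  by move=> k; rewrite /B; case: ifP => _ //; case: ifP.
have := ind B mB.
have -> : \bigcap_(k in [set: 'I_n]) (W k @^-1` B k) = W i @^-1` A i `&` W j @^-1` A j.
  apply/seteqP; split => w.
    move=> h; split.
      by have := h i I; rewrite /B /= eqxx.
    by have := h j I; rewrite /B /= (negbTE ji) eqxx.
  move=> [hi hj] k _; rewrite /B /=; case: ifP => [/eqP->//|_].
  by case: ifP => [/eqP->//|_].
move=> ->.
rewrite (bigD1 i)//= (bigD1 j)//= big1 ?mule1.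
  by rewrite /B eqxx (negbTE ji) eqxx.
move=> k /andP[ki kj]; rewrite /B (negbTE ki) (negbTE kj) preimage_setT.
exact: probability_setT.
Qed.
End D.
Section E.
Context {R : realType}.
Lemma alg n (p : 'I_n -> R) k :
  let m := \sum_(i < n) (- k * p i) in
  \sum_(i < n) \sum_(j < n) (k ^+ 2 * (if i == j then p i else p i * p j))
  + \sum_(i < n) (2 * m * k * p i) + m ^+ 2
  = k ^+ 2 * (\sum_(i < n) p i - \sum_(i < n) p i ^+ 2).
Proof.
move=> m.
have hm : m = - k * \sum_(i < n) p i by rewrite /m mulr_sumr.
have h2 : \sum_(i < n) (2 * m * k * p i) = 2 * m * k * \sum_(i < n) p i.
  by rewrite [RHS]mulr_sumr.
have h1 : forall i, \sum_(j < n) (k ^+ 2 * (if i == j then p i else p i * p j)) =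
   k ^+ 2 * (p i * \sum_(j < n) p j + (p i - p i ^+ 2)).
  move=> i; rewrite -mulr_sumr; congr (_ * _).
  rewrite (bigD1 i)//= eqxx (bigD1 i (P := predT))//=.
  rewrite (eq_bigr (fun j => p i * p j)); last by move=> j ji; rewrite eq_sym (negbTE ji).
  by rewrite -mulr_sumr; ring.
rewrite (eq_bigr _ (fun i _ => h1 i)) -mulr_sumr big_split /= -mulr_sumr.
rewrite -mulr_suml sumrB hm.
ring.
Qed.
End E.
Theorem lemma1 (R : realType) (n : nat) (d : measure_display)
  (T : measurableType d) (P : probability T R)
  (W : 'I_n -> {RV P >-> R}) (sigma lam eps : R) (mu0 : 'I_n -> R) :
  0 < sigma -> 0 < lam -> 0 < eps -> eps < 2 * lam ->
  mutually_independent W ->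
  (forall i (A : set R), measurable A ->
     distribution P (W i) A = normal_prob 0 sigma A) ->
  let X := fun w : T => grad2_dfFD (fun i => mu0 i + W i w) lam eps in
  ('E_P[X] = (- 2^-1 * \sum_(i < n) varphi sigma (mu0 i) lam eps / eps)%:E
   /\ 'V_P[X] = ((2 * eps)^-1 * \sum_(i < n) varphi sigma (mu0 i) lam eps / eps
                 - 4^-1 * \sum_(i < n) (varphi sigma (mu0 i) lam eps / eps) ^+ 2)%:E)%E.
Proof.
move=> s0 l0 e0 el ind dist X.
pose p i := varphi sigma (mu0 i) lam eps / 2.
pose E i := W i @^-1` Aset lam eps (mu0 i).
have mE i : measurable (E i) := measurable_funPTI (W i) (Aset_meas lam eps (mu0 i)).
have PE i : P (E i) = (p i)%:E.
  by rewrite -normal_A// -(dist i _ (Aset_meas _ _ _)).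
have PEE i j : P (E i `&` E j) = (if i == j then p i else p i * p j)%:E.
  case: eqP => [->|/eqP ij]; first by rewrite setIid PE.
  rewrite (@indep2 _ _ _ P n W (fun k => Aset lam eps (mu0 k)) ind _ i j ij); last first.
    by move=> k; exact: Aset_meas.
  by rewrite -/(E i) -/(E j) !PE -EFinM.
set k := eps^-1.
have XE : X = (fun w => \sum_(i < n) (- k * \1_(E i) w))%R.
  apply/funext => w; rewrite /X grad_pt// mulr_sumr; apply: eq_bigr => i _.
  by rewrite -indic_cnd.
have EX : ('E_P[X] = (\sum_(i < n) (- k * p i))%:E)%E.
  rewrite XE.
  have [_ ->] := @E_sum R d T P _ (index_enum 'I_n) (fun i w => - k * \1_(E i) w)%R
    (fun i => @Lfun_sindic R d T P (- k) _ (mE i)).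
  rewrite -sumEFin; apply: eq_bigr => i _; by rewrite E_sindic// PE.
split.
  rewrite EX; congr EFin; rewrite mulr_sumr; apply: eq_bigr => i _.
  rewrite /p /k; field; exact: lt0r_neq0.
rewrite /variance covariance.unlock EX /=.
set m := \sum_(i < n) (- k * p i).
pose F1 := (fun w => \sum_(i < n) (fun w => \sum_(j < n) (k ^+ 2 * \1_(E i `&` E j) w)) w)%R.
pose F2 := (fun w => \sum_(i < n) (2 * m * k * \1_(E i) w))%R.
have GE : ((X \- cst m) * (X \- cst m))%R = (F1 \+ F2 \+ cst (m ^+ 2))%R.
  apply/funext => w; rewrite XE /F1 /F2 /=.
  rewrite !fctE /=.
  set S := \sum_(i < n) (\1_(E i) w : R).
  have hS : \sum_(i < n) - k * \1_(E i) w = - k * S by rewrite [RHS]mulr_sumr.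
  have hF2 : \sum_(i < n) (2 * m * k * \1_(E i) w) = 2 * m * k * S by rewrite [RHS]mulr_sumr.
  have hF1 : \sum_(i < n) \sum_(j < n) (k ^+ 2 * \1_(E i `&` E j) w) = k ^+ 2 * (S * S).
    rewrite mulr_suml mulr_sumr; apply: eq_bigr => i _.
    rewrite mulr_sumr mulr_sumr; apply: eq_bigr => j _.
    by rewrite indicI /= mulrA.
  rewrite hS hF1 hF2; ring.
rewrite GE.
have Lg i : (fun w => \sum_(j < n) (k ^+ 2 * \1_(E i `&` E j) w))%R \in Lfun P 1.
  exact: (@E_sum R d T P _ (index_enum 'I_n) (fun j w => k ^+ 2 * \1_(E i `&` E j) w)%R
    (fun j => @Lfun_sindic R d T P _ _ (measurableI _ _ (mE i) (mE j)))).1.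
have [L1 E1] := @E_sum R d T P _ (index_enum 'I_n)
   (fun i => fun w => \sum_(j < n) (k ^+ 2 * \1_(E i `&` E j) w))%R Lg.
have [L2 E2] := @E_sum R d T P _ (index_enum 'I_n) (fun i w => 2 * m * k * \1_(E i) w)%R
    (fun i => @Lfun_sindic R d T P _ _ (mE i)).
have E1' : ('E_P[F1] = (\sum_(i < n) \sum_(j < n)
    (k ^+ 2 * (if i == j then p i else p i * p j)))%:E)%E.
  rewrite /F1 E1 -sumEFin; apply: eq_bigr => i _.
  have [_ ->] := @E_sum R d T P _ (index_enum 'I_n) (fun j w => k ^+ 2 * \1_(E i `&` E j) w)%R
    (fun j => @Lfun_sindic R d T P _ _ (measurableI _ _ (mE i) (mE j))).
  rewrite -sumEFin; apply: eq_bigr => j _.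
  by rewrite E_sindic ?PEE//; exact: measurableI.
have E2' : ('E_P[F2] = (\sum_(i < n) (2 * m * k * p i))%:E)%E.
  rewrite /F2 E2 -sumEFin; apply: eq_bigr => i _.
  by rewrite E_sindic ?PE.
rewrite expectationD; last exact: Lfun_cst.
  2: by rewrite rpredD.
rewrite expectationD// E1' E2' expectation_cst -!EFinD; congr EFin.
have := alg _ p k; rewrite -/m => ->.
rewrite mulrBr !mulr_sumr -!sumrB; apply: eq_bigr => i _.
rewrite /p /k; field; exact: lt0r_neq0.
Qed.
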